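(* Let $\beta=(\beta_n)_{n\ge0}$ be a sequence of positive numbers with $\liminf_n\beta_n^{1/n}\ge1$. If every symbol $\phi$ with $\phi(0)=0$ induces a bounded composition operator $C_\phi$ on $H^2(\beta)$, then $\beta$ is bounded above.
   Context: $H^2(\beta)$ is the Hilbert space of analytic functions $f(z)=\sum_{n\ge0}a_nz^n$ on the unit disk $\mathbb D$ with $\|f\|^2=\sum_{n\ge0}|a_n|^2\beta_n<\infty$. A symbol is a non-constant analytic map $\phi:\mathbb D\to\mathbb D$ and $C_\phi f=f\circ\phi$; ''bounded on $H^2(\beta)$'' means $C_\phi$ maps $H^2(\beta)$ boundedly into itself. *)

(* Defs.v *)
(* Complex numbers are R[i] (mathcomp-real-closed),
   topologized as the normed space R[i]^o (regular normed structure of the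
   numFieldType R[i], norm = complex modulus). *)
From HB Require Import structures.
From mathcomp Require Import all_boot all_order all_algebra.
From mathcomp Require Import all_classical all_reals all_analysis.
From mathcomp Require Import complex.
Set Implicit Arguments. Unset Strict Implicit. Unset Printing Implicit Defensive.
Import Order.TTheory GRing.Theory Num.Theory.
Import numFieldNormedType.Exports.
Local Open Scope ring_scope.
Local Open Scope complex_scope.
Local Open Scope classical_set_scope.

Definition in_disk (R : rcfType) (z : R[i]) : Prop := `|z| < 1.

Definition psums (R : realType) (a : nat -> R[i]) (z : R[i]) : nat -> R[i]^o :=
  fun N => \sum_(k < N) a k * z ^+ k.

(* the power series with coefficients a converges at every point of the disk;
   i.e. it defines an analytic function on the disk *)
Definition ps_on_disk (R : realType) (a : nat -> R[i]) : Prop :=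
  forall z : R[i], in_disk z -> cvgn (psums a z).

(* value of the power series at z (meaningful when it converges) *)
Definition ps_eval (R : realType) (a : nat -> R[i]) (z : R[i]) : R[i] :=
  limn (psums a z).

(* A symbol: a non-constant analytic map from the disk into the disk,
   given by its Taylor coefficients c. *)
Definition is_symbol (R : realType) (c : nat -> R[i]) : Prop :=
  [/\ ps_on_disk c,
      (forall z, in_disk z -> in_disk (ps_eval c z)) &
      (exists z1 z2, [/\ in_disk z1, in_disk z2 & ps_eval c z1 != ps_eval c z2])].

Definition H2norm2 (R : realType) (beta : nat -> R) (a : nat -> R[i]) : \bar R :=
  (\sum_(0 <= n <oo) ((ComplexField.Normc.normc (a n)) ^+ 2 * beta n)%:E)%E.

Definition inH2 (R : realType) (beta : nat -> R) (a : nat -> R[i]) : Prop :=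
  ps_on_disk a /\ (H2norm2 beta a < +oo)%E.

(* C_phi maps H^2(beta) boundedly into itself: there is M such that for every f
   in H^2(beta), f o phi is (the function of) an element g of H^2(beta) with
   ||g||^2 <= M ||f||^2. *)
Definition comp_bounded (R : realType) (beta : nat -> R) (c : nat -> R[i]) : Prop :=
  exists M : R, forall a : nat -> R[i], inH2 beta a ->
    exists b : nat -> R[i],
      [/\ inH2 beta b,
          (H2norm2 beta b <= M%:E * H2norm2 beta a)%E &
          forall z, in_disk z -> psums b z @ \oo --> (ps_eval a (ps_eval c z) : R[i]^o)].

(* Main.v *)
Require Import Defs.
From HB Require Import structures.
From mathcomp Require Import all_boot all_order all_algebra.
From mathcomp Require Import all_classical all_reals all_analysis.
From mathcomp Require Import complex.
From mathcomp Require Import ring lra.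
Import Order.TTheory GRing.Theory Num.Theory.
Import numFieldNormedType.Exports.
Local Open Scope ring_scope.
Local Open Scope complex_scope.
Local Open Scope classical_set_scope.

Set Implicit Arguments.
Unset Strict Implicit.
Section S.
Variable R : realType.
Import ComplexField.
Notation cRe := (@complex.Re R).
Notation cIm := (@complex.Im R).
Notation nc := (@Normc.normc R).

Lemma nc_def (z : R[i]) : `|z| = (nc z)%:C.
Proof. by case: z. Qed.

Lemma nc_ge0 (z : R[i]) : 0 <= nc z.
Proof. by case: z => a b /=; apply: sqrtr_ge0. Qed.

Lemma Re_le (z : R[i]) : `|cRe z| <= nc z.
Proof.
case: z => a b /=. rewrite -sqrtr_sqr ler_sqrt; last by rewrite addr_ge0 // sqr_ge0.
by rewrite lerDl sqr_ge0.
Qed.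

Lemma nc_X (z : R[i]) k : nc (z ^+ k) = nc z ^+ k.
Proof. by have := normrX k z; rewrite !nc_def -rmorphXn; case. Qed.

Lemma nc_real (r : R) : nc (r%:C) = `|r|.
Proof. by rewrite /= expr0n addr0 sqrtr_sqr. Qed.

Lemma nc_sum N (f : nat -> R[i]) : nc (\sum_(k < N) f k) <= \sum_(k < N) nc (f k).
Proof.
elim: N => [|N IH]; first by rewrite !big_ord0 Normc.normc0.
rewrite !big_ord_recr /=; apply: le_trans (le_normcD _ _) _; exact: lerD.
Qed.

Lemma Re_psums (d : nat -> R[i]) (x : R) N :
  cRe (psums d x%:C N) = \sum_(k < N) cRe (d k) * x ^+ k.
Proof.
rewrite /psums raddf_sum; apply: eq_bigr => k _.
by rewrite -rmorphXn; case: (d k) => a b /=; rewrite mulr0 subr0.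
Qed.

Lemma Im_psums (d : nat -> R[i]) (x : R) N :
  cIm (psums d x%:C N) = \sum_(k < N) cIm (d k) * x ^+ k.
Proof.
rewrite /psums raddf_sum; apply: eq_bigr => k _.
by rewrite -rmorphXn; case: (d k) => a b /=; rewrite mulr0 add0r.
Qed.

Lemma G (t w : nat -> R) (W : R) : (forall k, `|t k| <= w k) ->
  (forall N, \sum_(k < N) w k <= W) -> cvgn (fun N => \sum_(k < N) t k).
Proof.
move=> tw hW.
have w0 k : 0 <= w k by apply: le_trans (tw k).
have h1 : cvgn (fun N => \sum_(k < N) (w k + t k)).
  apply: nondecreasing_is_cvgn.
    apply/nondecreasing_seqP => n; rewrite big_ord_recr /= lerDl.
    by have := tw n; rewrite ler_norml; lra.
  exists (W + W) => _ [n0 _ <-]; rewrite big_split /=; apply: lerD; first exact: hW.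
  apply: le_trans (hW n0); apply: ler_sum => k _; by have := tw k; rewrite ler_norml; lra.
have h2 : cvgn (fun N => \sum_(k < N) w k).
  apply: nondecreasing_is_cvgn.
    by apply/nondecreasing_seqP => n; rewrite big_ord_recr /= lerDl.
  by exists W => _ [n0 _ <-].
rewrite (_ : (fun N => _) = (fun N => \sum_(k < N) (w k + t k)) - (fun N => \sum_(k < N) w k)).
  exact: is_cvgB h1 h2.
apply/funext => N /=.
change (\sum_(k < N) t k = \sum_(k < N) (w k + t k) - \sum_(k < N) w k :> R).
by rewrite big_split /= addrAC subrr add0r.
Qed.
Lemma Im_le (z : R[i]) : `|cIm z| <= nc z.
Proof.
case: z => a b /=. rewrite -sqrtr_sqr ler_sqrt; last by rewrite addr_ge0 // sqr_ge0.
by rewrite lerDr sqr_ge0.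
Qed.

Lemma nc_le (z : R[i]) : nc z <= `|cRe z| + `|cIm z|.
Proof.
case: z => a b /=. rewrite -(ger0_norm (addr_ge0 (normr_ge0 a) (normr_ge0 b))).
rewrite -sqrtr_sqr ler_sqrt; last by rewrite sqr_ge0.
have ha : `|a| ^+ 2 = a ^+ 2 by apply: real_normK; apply: num_real.
have hb : `|b| ^+ 2 = b ^+ 2 by apply: real_normK; apply: num_real.
have := normr_ge0 a; have := normr_ge0 b.
move: ha hb; set x := `|a|; set y := `|b|; nra.
Qed.

Lemma L2 (u : nat -> R[i]^o) (l : R[i]) : u @ \oo --> (l : R[i]^o) ->
  (fun n => cRe (u n) : R) @ \oo --> (cRe l : R).
Proof.
move=> /cvgrPdist_lt H.
apply/(@cvgrPdist_lt R R^o) => e e0.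
have := H (e%:C); rewrite ltcR => /(_ e0).
apply: filterS => n.
rewrite nc_def ltcR => h; apply: le_lt_trans h.
by rewrite -raddfB /=; apply: Re_le.
Qed.

Lemma L2i (u : nat -> R[i]^o) (l : R[i]) : u @ \oo --> (l : R[i]^o) ->
  (fun n => cIm (u n) : R) @ \oo --> (cIm l : R).
Proof.
move=> /cvgrPdist_lt H.
apply/(@cvgrPdist_lt R R^o) => e e0.
have := H (e%:C); rewrite ltcR => /(_ e0).
apply: filterS => n.
rewrite nc_def ltcR => h; apply: le_lt_trans h.
by rewrite -raddfB /=; apply: Im_le.
Qed.

Lemma L3 (u : nat -> R[i]^o) (a b : R) :
  (fun n => cRe (u n) : R) @ \oo --> a ->
  (fun n => cIm (u n) : R) @ \oo --> b ->
  u @ \oo --> ((a +i* b) : R[i]^o).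
Proof.
move=> /(@cvgrPdist_lt R R^o) Ha /(@cvgrPdist_lt R R^o) Hb.
apply/cvgrPdist_lt => eps; rewrite ltcE /= => /andP[/eqP Ie Re0].
have e0 : 0 < complex.Re eps / 2 by rewrite divr_gt0.
have := Ha _ e0; have := Hb _ e0.
move=> hb ha; near=> n.
have h1 := (near ha n); have h2 := (near hb n).
rewrite nc_def ltcE /= Ie eqxx /=.
apply: le_lt_trans (nc_le _) _.
rewrite [complex.Re eps](splitr (complex.Re eps)).
rewrite !raddfB /=.
by apply: ltrD; [exact: h1 | exact: h2].
Unshelve. all: by end_near.
Qed.

Lemma conv_ps (c : nat -> R) (C : R) : (forall m, 0 <= c m) ->
  (forall N, \sum_(m < N) c m <= C) -> forall z : R[i], nc z <= 1 ->
  exists l : R[i], psums (fun m => (c m)%:C) z @ \oo --> (l : R[i]^o) /\ nc l <= C.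
Proof.
move=> c0 hC z z1.
have C0 : 0 <= C by have := hC 0%N; rewrite big_ord0.
have tb : forall k, nc ((c k)%:C * z ^+ k) <= c k.
  move=> k; rewrite Normc.normcM nc_real nc_X ger0_norm //.
  by apply: ler_piMr => //; apply: exprn_ile1 => //; apply: nc_ge0.
have hu : cvgn (fun N => cRe (psums (fun m => (c m)%:C) z N)).
  rewrite /psums; under eq_fun do rewrite raddf_sum.
  apply: (@G (fun k => cRe ((c k)%:C * z ^+ k)) c C) => // k; apply: le_trans (Re_le _) (tb k).
have hv : cvgn (fun N => cIm (psums (fun m => (c m)%:C) z N)).
  rewrite /psums; under eq_fun do rewrite raddf_sum.
  apply: (@G (fun k => cIm ((c k)%:C * z ^+ k)) c C) => // k; apply: le_trans (Im_le _) (tb k).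
set a := limn _ in hu; set b := limn _ in hv.
exists (a +i* b); split; first exact: L3.
have hw : (fun N => cRe (psums (fun m => (c m)%:C) z N) ^+ 2 + cIm (psums (fun m => (c m)%:C) z N) ^+ 2) @ \oo --> a ^+ 2 + b ^+ 2.
  by apply: cvgD; rewrite expr2; under eq_fun do rewrite expr2; apply: cvgM.
have : a ^+ 2 + b ^+ 2 <= C ^+ 2.
  rewrite -(cvg_lim _ hw) //; apply: limr_le; first exact: cvgP hw.
  apply: nearW => N.
  have hS : nc (psums (fun m => (c m)%:C) z N) <= C.
    rewrite /psums; apply: le_trans (nc_sum N (fun k => (c k)%:C * z ^+ k)) _; apply: le_trans (hC N).
    by apply: ler_sum => k _; apply: tb.
  move: hS; case: (psums _ _ _) => p q /= hS.
  have := sqr_sqrtr (_ : 0 <= p ^+ 2 + q ^+ 2); rewrite addr_ge0 ?sqr_ge0 // => /(_ isT) <-.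
  by have := sqrtr_ge0 (p ^+ 2 + q ^+ 2); move: hS; set s := Num.sqrt _; nra.
move=> h; rewrite /= -(ger0_norm C0) -sqrtr_sqr ler_sqrt //.
by rewrite sqr_ge0.
Qed.

Lemma geom (y : R) p m : \sum_(p <= k < p + m) y ^+ k * (1 - y) = y ^+ p - y ^+ (p + m).
Proof.
elim: m => [|m IH]; first by rewrite addn0 big_geq // subrr.
rewrite addnS big_nat_recr /= ?leq_addr // IH exprS; ring.
Qed.

Lemma geomle (y : R) p m : 0 <= y -> y <= 1/2 -> \sum_(p <= k < p + m) y ^+ k <= 2 * y ^+ p.
Proof.
move=> y0 y1.
have := geom y p m; rewrite -big_distrl /=.
have s0 : 0 <= \sum_(p <= k < p + m) y ^+ k by apply: sumr_ge0 => k _; apply: exprn_ge0.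
have e0 : 0 <= y ^+ (p + m) by apply: exprn_ge0.
move: s0 e0; set s := \sum_(_ <= _ < _) _; set t := y ^+ (p + m); set u := y ^+ p.
move=> s0 e0 h. nra.
Qed.

Lemma ident (a : nat -> R) :
  (forall x : R, 0 < x -> x < 1 -> (fun N => \sum_(k < N) a k * x ^+ k) @ \oo --> (0:R)) ->
  forall n, a n = 0.
Proof.
move=> H.
have [B hB] : exists B, forall k, `|a k| * (1/2) ^+ k <= B.
  have cS := H (1/2) ltac:(lra) ltac:(lra).
  have /ex_bound [|B0 hB0] := cvg_seq_bounded (cvgP _ cS).
    exact: (@globally_properfilter _ _ 0%N).
  exists (B0 + B0) => k.
  have h1 : `|\sum_(i < k.+1) a i * (1/2)^+i| <= B0 := hB0 k.+1 I.
  have h2 : `|\sum_(i < k) a i * (1/2)^+i| <= B0 := hB0 k I.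
  rewrite big_ord_recr /= in h1.
  set S := \sum_(i < k) _ in h1 h2.
  have -> : `|a k| * (1/2) ^+ k = `|S + a k * (1/2) ^+ k - S|.
    by rewrite addrAC subrr add0r normrM normrX (ger0_norm (_ : (0:R) <= 1/2)) //; lra.
  apply: le_trans (ler_normB _ _) _; exact: lerD.
have B0 : 0 <= B by apply: le_trans (hB 0%N); rewrite mulr_ge0.
suff: forall n j, (j < n)%N -> a j = 0 by move=> h n; apply: (h n.+1).
elim=> [//|n IH j]; rewrite ltnS leq_eqVlt => /orP[/eqP ->|/IH //].
apply/eqP/negPn/negP => an0.
pose A : R := `|a n|.
have A0 : 0 < A by rewrite /A normr_gt0.
set K := 2 * B * 2 ^+ n.+1 + 1.
have K0 : 0 < K by rewrite /K; have := exprn_ge0 n.+1 (_ : (0:R) <= 2); nra.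
set x := Num.min (1/4) (A / (2 * K)).
have x0 : 0 < x by rewrite lt_min; apply/andP; split; [lra | apply: divr_gt0 => //; lra].
have x1 : x <= 1/4 by rewrite ge_min lexx.
have x2 : x <= A / (2 * K) by rewrite ge_min lexx orbT.
have xn0 : 0 < x ^+ n by apply: exprn_gt0.
have eps0 : 0 < A * x ^+ n / 2 by apply: divr_gt0 => //; apply: mulr_gt0.
have x1' : x < 1 by lra.
have hN := cvgr0_norm_lt _ (H x x0 x1') _ eps0.
have [N [nN hN']] : exists N, (n < N)%N /\ `|\sum_(k < N) a k * x ^+ k| < A * x ^+ n / 2.
  case: hN => N0 _ hN0.
  exists (maxn N0 n.+1); split; first by rewrite leq_max ltnSn orbT.
  by apply: hN0; rewrite /= leq_max leqnn.
have split : \sum_(k < N) a k * x ^+ k = a n * x ^+ n + \sum_(n.+1 <= k < N) a k * x ^+ k.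
  rewrite -(big_mkord xpredT (fun k => a k * x ^+ k)).
  have nN' := ltnW nN.
  rewrite (@big_cat_nat _ _ _ n) //= [X in _ + X]big_ltn //.
  rewrite big_nat_cond big1 ?add0r // => k /andP[/andP[_ kn] _].
  by rewrite (IH k kn) mul0r.
have tail : `|\sum_(n.+1 <= k < N) a k * x ^+ k| <= 2 * B * (2 * x) ^+ n.+1.
  apply: le_trans (ler_norm_sum _ _ _) _.
  apply: le_trans (_ : \sum_(n.+1 <= k < N) B * (2 * x) ^+ k <= _).
    apply: ler_sum => k _.
    rewrite normrM normrX (ger0_norm (ltW x0)).
    have -> : x ^+ k = (1/2) ^+ k * (2 * x) ^+ k by rewrite -exprMn; congr (_ ^+ _); field.
    rewrite mulrA; apply: ler_wpM2r; first by apply: exprn_ge0; lra.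
    exact: hB.
  rewrite -mulr_sumr -(subnKC nN) -mulrA mulrCA.
  apply: ler_wpM2l => //; apply: geomle; lra.
have : A * x ^+ n < A * x ^+ n / 2 + K * x * x ^+ n.
  have e1 : A * x ^+ n = `|a n * x ^+ n|.
    by rewrite normrM normrX (ger0_norm (ltW x0)).
  rewrite {1}e1.
  rewrite (_ : a n * x ^+ n = \sum_(k < N) a k * x ^+ k - \sum_(n.+1 <= k < N) a k * x ^+ k); last first.
    by rewrite split addrK.
  apply: le_lt_trans (ler_normB _ _) _.
  apply: ltr_leD; first exact: hN'.
  apply: le_trans tail _.
  have -> : 2 * B * (2 * x) ^+ n.+1 = (2 * B * 2 ^+ n.+1) * x * x ^+ n.
    by rewrite exprMn [x ^+ n.+1]exprS; ring.
  apply: ler_wpM2r; first exact: exprn_ge0 (ltW x0).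
  apply: ler_wpM2r; first exact: ltW.
  rewrite /K; lra.
have : K * x <= A / 2.
  have := ler_wpM2l (ltW K0) x2.
  have -> : K * (A / (2 * K)) = A / 2 by field; apply/eqP; lra.
  done.
move=> h1 h2.
have : K * x * x ^+ n <= A / 2 * x ^+ n by apply: ler_wpM2r => //; exact: ltW.
nra.
Qed.
End S.

Section C.
Variable R : realType.
Variable beta : nat -> R.

Fixpoint sc (m : nat) : nat :=
  if m is m'.+1 then (sc m' + ((0 < m')%N && ((4:R) ^+ sc m' <= beta m')%R))%N else 0%N.
Definition sel m := (0 < m)%N && ((4:R) ^+ sc m <= beta m).
Lemma scS m : sc m.+1 = (sc m + sel m)%N. Proof. by []. Qed.
Definition cr m : R := if sel m then (1/2) ^+ (sc m).+2 else 0.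

Lemma cr_ge0 m : 0 <= cr m.
Proof. by rewrite /cr; case: ifP => // _; apply: exprn_ge0; lra. Qed.

Lemma cr0 : cr 0 = 0. Proof. by []. Qed.

Lemma F1 N : \sum_(m < N) cr m = 1/2 - (1/2) ^+ (sc N).+1.
Proof.
elim: N => [|N IH]; first by rewrite big_ord0 /= expr1 subrr.
rewrite big_ord_recr scS /= IH /cr -/(sel N).
case: (sel N) => /=; last by rewrite addn0 addr0.
rewrite addn1 !(exprS (1/2) (sc N).+1); lra.
Qed.

Lemma F3 N : (sc N)%:R / 16 <= \sum_(m < N) (cr m) ^+ 2 * beta m.
Proof.
elim: N => [|N IH]; first by rewrite big_ord0 /= mul0r.
rewrite big_ord_recr scS /= natrD mulrDl; apply: lerD => //.
rewrite /cr /sel; case: ifP => /= [|_]; last by rewrite expr0n /= !mul0r.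
move=> /andP[_ hb].
have e : ((1/2) ^+ (sc N).+2) ^+ 2 * 4 ^+ sc N = 1/16 :> R.
  rewrite -exprM mulnC exprM.
  have g : forall q : R, q ^+ (sc N).+2 * 4 ^+ sc N = q ^+ 2 * (q * 4) ^+ sc N.
    by move=> q; rewrite exprMn -addn2 exprD; ring.
  rewrite g (_ : (1/2) ^+ 2 * 4 = 1 :> R); last by rewrite expr2; field.
  by rewrite expr1n mulr1 -exprM !exprS expr0; field.
rewrite -e; apply: ler_wpM2l => //; apply: exprn_ge0; apply: exprn_ge0; lra.
Qed.

Lemma sc_mono m k : (sc m <= sc (m + k))%N.
Proof. elim: k => [|k IH]; first by rewrite addn0. rewrite addnS scS; exact: leq_trans IH (leq_addr _ _). Qed.

Lemma F5 : (forall N (B : R), exists m, (N < m)%N /\ B < beta m) ->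
  forall j, exists N, (j <= sc N)%N.
Proof.
move=> hU; elim=> [|j [N hN]]; first by exists 0%N.
have [m [Nm hm]] := hU N ((4:R) ^+ j).
have hsm : (j <= sc m)%N by rewrite (leq_trans hN) // -(subnKC (ltnW Nm)) sc_mono.
case: (ltnP j (sc m)) => hj; first by exists m.
have ej : sc m = j by apply/eqP; rewrite eqn_leq hj hsm.
exists m.+1; rewrite scS /sel ej.
have -> : (0 < m)%N by apply: leq_ltn_trans Nm.
by rewrite (ltW hm) addn1.
Qed.

End C.

Section Main.
Variable R : realType.
Import ComplexField.
Notation cRe := (@complex.Re R).
Notation cIm := (@complex.Im R).
Notation nc := (@Normc.normc R).

Lemma e1_psums (w : R[i]) : psums (fun k : nat => if k == 1%N then (1 : R[i]) else 0) w @ \oo --> (w : R[i]^o).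
Proof.
apply: cvg_near_cst; exists 2%N => // N /= hN.
case: N hN => [|[|n]] // _.
rewrite /psums !big_ord_recl big1 /=.
  by rewrite mul0r add0r mul1r expr1 addr0.
by move=> i _; rewrite mul0r.
Qed.


Lemma e1_norm (beta : nat -> R) :
  H2norm2 beta (fun k : nat => if k == 1%N then (1 : R[i]) else 0) = (beta 1%N)%:E.
Proof.
rewrite /H2norm2; apply: lim_near_cst; first exact: ereal_hausdorff.
exists 2%N => // N /= hN.
rewrite sumEFin; congr EFin.
rewrite big_mkord; case: N hN => [|[|n]] // _; rewrite !big_ord_recl big1 /=.
  by rewrite expr0n /= addr0 sqrtr0 expr0n /= mul0r add0r expr1n !addr0 sqrtr1 expr1n mul1r.
by move=> i _; rewrite expr0n /= addr0 sqrtr0 expr0n /= mul0r.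
Qed.
End Main.

Unset Implicit Arguments.
Set Strict Implicit.

Lemma main_aux (R : realType) (beta : nat -> R) :
  (forall n, 0 < beta n) ->
  (1%:E <= limn_einf (fun n => (beta n `^ (n%:R)^-1)%:E))%E ->
  (forall c : nat -> R[i], is_symbol c -> ps_eval c 0 = 0 -> comp_bounded beta c) ->
  exists M : R, forall n, beta n <= M.
Proof.
move=> bpos _ H.
apply: contrapT => nb.
have hU : forall N (B : R), exists m, (N < m)%N /\ B < beta m.
  move=> N B.
  have [C hC] : exists C, forall i, (i <= N)%N -> beta i <= C.
    elim: N {B} => [|N [C hC]]; first by exists (beta 0%N) => i; rewrite leqn0 => /eqP ->.
    exists (Num.max C (beta N.+1)) => i; rewrite leq_eqVlt => /orP[/eqP ->|].
      by rewrite le_max lexx orbT.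
    by rewrite ltnS => /hC h; rewrite le_max h.
  apply: contrapT => hn; apply: nb; exists (Num.max B C) => n.
  case: (leqP n N) => hnN; first by rewrite le_max hC ?orbT.
  rewrite le_max; apply/orP; left; rewrite leNgt; apply/negP => hb; apply: hn; by exists n.
pose cc : nat -> R[i] := fun m => (cr beta m)%:C.
have sumle : forall N, \sum_(m < N) cr beta m <= 1/2.
  move=> N; rewrite F1.
  have : 0 <= (1/2:R) ^+ (sc beta N).+1 by apply: exprn_ge0; lra.
  lra.
have hconv : forall z : R[i], in_disk z -> exists l : R[i],
    psums cc z @ \oo --> (l : R[i]^o) /\ Normc.normc l <= 1/2.
  move=> z hz; apply: (conv_ps (@cr_ge0 _ beta) sumle).
  move: hz; rewrite /in_disk nc_def (_ : (1 : R[i]) = 1%:C) // ltcR; exact: ltW.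
have pev : forall z, in_disk z -> psums cc z @ \oo --> (ps_eval cc z : R[i]^o).
  by move=> z /hconv [l [hl _]]; rewrite /ps_eval (cvg_lim _ hl).
have h0 : ps_eval cc 0 = 0.
  rewrite /ps_eval (_ : psums cc 0 = fun _ => 0) ?lim_cst //.
  apply/funext => N; rewrite /psums big1 // => k _.
  case: (nat_of_ord k) => [|k']; last by rewrite expr0n mulr0.
  by rewrite /cc cr0 mul0r.
have hsym : is_symbol cc.
  split.
  - by move=> z /hconv [l [hl _]]; exact: cvgP hl.
  - move=> z hz; have [l [hl hl2]] := hconv z hz.
    rewrite /ps_eval (cvg_lim _ hl) // /in_disk nc_def (_ : (1 : R[i]) = 1%:C) // ltcR.
    lra.
  - apply: contrapT => hne.
    have d0 : in_disk (0 : R[i]) by rewrite /in_disk normr0 ltr01.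
    have allz : forall z, in_disk z -> ps_eval cc z = 0.
      move=> z hz; apply: contrapT => hnz; apply: hne; exists z, 0; split => //.
      by rewrite h0; apply/eqP.
    have crz : forall m, cr beta m = 0.
      apply: ident => x x0 x1.
      have hx : in_disk x%:C.
        by rewrite /in_disk nc_def nc_real (_ : (1 : R[i]) = 1%:C) // ltcR ger0_norm // ltW.
      have := L2 (pev _ hx); rewrite allz //.
      by under eq_fun do rewrite Re_psums.
    have [N hN] := F5 hU 1.
    have := F1 beta N; rewrite big1 => [|m _]; last by rewrite crz.
    case: (sc beta N) hN => [//|s _].
    have : (1/2 : R) ^+ s <= 1 by apply: exprn_ile1; lra.
    rewrite !exprS; lra.
have [M hM] := H cc hsym h0.
pose e1 := fun k : nat => if k == 1%N then (1 : R[i]) else 0.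
have inH2e1 : inH2 beta e1.
  split; first by move=> z _; exact: cvgP (@e1_psums _ z).
  by rewrite e1_norm ltry.
have [b [[bps bfin] _ bconv]] := hM e1 inH2e1.
have pe1 : forall w, ps_eval e1 w = w by move=> w; exact: cvg_lim (@e1_psums _ w).
have hb : b = cc.
  pose d := fun k => b k - cc k.
  have dz : forall x : R, 0 < x -> x < 1 -> psums d x%:C @ \oo --> (0 : R[i]^o).
    move=> x x0 x1.
    have hx : in_disk x%:C.
      by rewrite /in_disk nc_def nc_real (_ : (1 : R[i]) = 1%:C) // ltcR ger0_norm // ltW.
    have := bconv _ hx; rewrite pe1 => hb1.
    have e : psums d x%:C = psums b x%:C - psums cc x%:C.
      apply/funext => N; rewrite /psums /=.
      change (\sum_(k < N) d k * x%:C ^+ k = \sum_(k < N) b k * x%:C ^+ k - \sum_(k < N) cc k * x%:C ^+ k).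
      rewrite -sumrB; apply: eq_bigr => k _.
      by rewrite /d mulrBl.
    have := cvgB hb1 (pev _ hx); rewrite subrr e; apply; exact: _.
  have re : forall k, complex.Re (d k) = 0.
    apply: ident => x x0 x1; have := L2 (dz x x0 x1).
    by under eq_fun do rewrite Re_psums.
  have im : forall k, complex.Im (d k) = 0.
    apply: ident => x x0 x1; have := L2i (dz x x0 x1).
    by under eq_fun do rewrite Im_psums.
  apply/funext => k.
  have hk : d k = 0.
    move: (re k) (im k); case: (d k) => p q /= -> ->; by [].
  exact: subr0_eq hk.
rewrite hb in bfin.
have key : forall N, (((sc beta N)%:R / 16)%:E <= H2norm2 beta cc)%E.
  move=> N; apply: (@le_trans _ _ ((\sum_(m < N) cr beta m ^+ 2 * beta m)%:E)).
    by rewrite lee_fin F3.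
  rewrite /H2norm2; apply: le_trans (nneseries_lim_ge N _); last first.
    by move=> n _ _; rewrite lee_fin mulr_ge0 ?sqr_ge0 ?ltW.
  rewrite sumEFin lee_fin big_mkord le_eqVlt; apply/orP; left; apply/eqP.
  by apply: eq_bigr => m _; rewrite /cc nc_real real_normK // num_real.
move: bfin key; case: (H2norm2 beta cc) => [r _ key| |];
  [ | by rewrite ltxx | by move=> _ /(_ 0%N); rewrite leeNy_eq].
have [N hN] := F5 hU (Num.trunc (16 * r)).+1.
have := key N; rewrite lee_fin => h1.
have := truncnS_gt (16 * r).
have : (Num.trunc (16 * r)).+1%:R <= (sc beta N)%:R :> R by rewrite ler_nat.
lra.
Qed.

Local Close Scope complex_scope.
Local Close Scope classical_set_scope.

Theorem mainTheorem4 (R : realType) (beta : nat -> R) :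
  (forall n, 0 < beta n) ->
  (1%:E <= limn_einf (fun n => (beta n `^ (n%:R)^-1)%:E))%E ->
  (forall c : nat -> R[i], is_symbol c -> ps_eval c 0 = 0 -> comp_bounded beta c) ->
  exists M : R, forall n, beta n <= M.
Proof. exact: main_aux. Qed.
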